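(* Let $S=\{(x_1,x_2)\in\mathbb{R}^2:x_1^4-x_1^2x_2+x_2^3=0\}$, $\tilde S^{o}=\{(x_0,x_1,x_2):x_1^4-x_0x_1^2x_2+x_0x_2^3=0,\ x_0>0\}$ and $\tilde S^{c}$ the same set with $x_0\ge0$. Then the linear form $X_0-X_2$ is positive on $\mathrm{conv}(\overline{\tilde S^{o}})\setminus\{0\}$, so $\mathrm{conv}(\overline{\tilde S^{o}})$ is closed and pointed, and $S$ is not closed at $\infty$, i.e. $\overline{\tilde S^{o}}\neq\tilde S^{c}$.
   Context: A closed convex cone $K$ is pointed if $K\cap(-K)=\{0\}$. $S$ is closed at $\infty$ if $\overline{\tilde S^{o}}=\tilde S^{c}$. Overline denotes closure, $\mathrm{conv}$ convex hull. *)

(* Defs.v *)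
From Stdlib Require Import Reals List.
Import ListNotations.
Open Scope R_scope.

Record pt3 := P3 { c0 : R; c1 : R; c2 : R }.

Definition origin : pt3 := P3 0 0 0.
Definition padd (p q : pt3) : pt3 := P3 (c0 p + c0 q) (c1 p + c1 q) (c2 p + c2 q).
Definition pscale (t : R) (p : pt3) : pt3 := P3 (t * c0 p) (t * c1 p) (t * c2 p).
Definition popp (p : pt3) : pt3 := P3 (- c0 p) (- c1 p) (- c2 p).

Definition dist3 (p q : pt3) : R :=
  sqrt ((c0 p - c0 q)^2 + (c1 p - c1 q)^2 + (c2 p - c2 q)^2).

Definition closure3 (A : pt3 -> Prop) (p : pt3) : Prop :=
  forall eps, 0 < eps -> exists q, A q /\ dist3 p q < eps.

Definition is_closed3 (A : pt3 -> Prop) : Prop :=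
  forall p, closure3 A p -> A p.

Definition conv3 (A : pt3 -> Prop) (p : pt3) : Prop :=
  exists l : list (R * pt3),
    Forall (fun wq => 0 <= fst wq /\ A (snd wq)) l /\
    fold_right (fun wq s => fst wq + s) 0 l = 1 /\
    p = fold_right (fun wq s => padd (pscale (fst wq) (snd wq)) s) origin l.

Definition pointed3 (K : pt3 -> Prop) : Prop :=
  forall p, K p -> K (popp p) -> p = origin.

Definition S (x1 x2 : R) : Prop := x1^4 - x1^2 * x2 + x2^3 = 0.

Definition Stilde_o (p : pt3) : Prop :=
  c1 p ^ 4 - c0 p * c1 p ^ 2 * c2 p + c0 p * c2 p ^ 3 = 0 /\ 0 < c0 p.

Definition Stilde_c (p : pt3) : Prop :=
  c1 p ^ 4 - c0 p * c1 p ^ 2 * c2 p + c0 p * c2 p ^ 3 = 0 /\ 0 <= c0 p.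

Definition closed_at_infinity_S : Prop :=
  forall p, closure3 Stilde_o p <-> Stilde_c p.

(* Main.v *)
Require Import Defs.
From Stdlib Require Import Reals List Lra Psatz Lia ClassicalEpsilon.
Import Defs.
Open Scope R_scope.

Definition Lf (p : pt3) := c0 p - c2 p.
Definition N1 (p : pt3) := Rabs (c0 p) + Rabs (c1 p) + Rabs (c2 p).

Lemma sq_lt (x y : R) : 0 <= x < y -> x ^ 2 < y ^ 2.
Proof. intros; nra. Qed.
Lemma p4_lt (x y : R) : 0 <= x < y -> x ^ 4 < y ^ 4.
Proof. intros. assert (x^2 < y^2) by (apply sq_lt; lra).
  replace (x^4) with ((x^2)^2) by ring. replace (y^4) with ((y^2)^2) by ring.
  apply sq_lt; split; [apply pow2_ge_0|lra]. Qed.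

Lemma poly_bound (q0 q1 q2 : R) :
  q1 ^ 4 - q0 * q1 ^ 2 * q2 + q0 * q2 ^ 3 = 0 -> 0 < q0 ->
  Rabs q0 + Rabs q1 + Rabs q2 <= 4 * (q0 - q2).
Proof.
  intros H H0.
  set (u := q1 ^ 2).
  assert (Hu : u ^ 2 - q0 * u * q2 + q0 * q2 ^ 3 = 0) by (unfold u; nra).
  assert (Hu0 : 0 <= u) by (unfold u; nra).
  assert (HA : q2 <= q0 / 4).
  { destruct (Rle_dec q2 0) as [h|h]. lra.
    assert (q0 * q2 ^ 3 <= q0 ^ 2 * q2 ^ 2 / 4) by (pose proof (pow2_ge_0 (u - q0*q2/2)); nra).
    assert (0 < q0 * q2 ^ 2) by (apply Rmult_lt_0_compat; [lra| apply pow_lt; lra]).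
    nra. }
  rewrite (Rabs_right q0) by lra.
  destruct (Rle_dec 0 q2) as [h|h].
  - assert (u <= q0 * q2).
    { destruct (Rle_dec u (q0*q2)) as [h'|h']. lra.
      assert (0 <= q0 * q2 ^ 3) by (apply Rmult_le_pos; [lra| apply pow_le; lra]). assert (0 <= q0*q2) by (apply Rmult_le_pos; lra). assert (0 < u*(u-q0*q2)) by (apply Rmult_lt_0_compat; lra). assert (u*(u-q0*q2) = u^2 - q0*u*q2) by ring. lra. }
    assert (q1 ^ 2 <= (q0/2)^2) by (unfold u in *; nra).
    assert (Rabs q1 <= q0 / 2).
    { destruct (Rle_dec (Rabs q1) (q0/2)) as [h2|h2]. lra.
      exfalso. pose proof (Rabs_pos q1).
      assert ((q0/2) ^ 2 < Rabs q1 ^ 2) by (apply sq_lt; lra).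
      rewrite RPow_abs in H4. rewrite Rabs_right in H4 by (apply Rle_ge; apply pow2_ge_0). lra. }
    rewrite (Rabs_right q2) by lra. lra.
  - assert (0 <= q0 * u) by (apply Rmult_le_pos; lra).
    assert (q0 * u * q2 <= 0). { assert (0 <= q0*u*(-q2)) by (apply Rmult_le_pos; lra). lra. }
    assert (u ^ 2 <= - q0 * q2 ^ 3) by nra.
    set (m := q0 - q2). assert (0 <= m) by (unfold m; lra).
    assert (Rabs q1 <= m).
    { destruct (Rle_dec (Rabs q1) m) as [h2|h2]. lra. exfalso.
      pose proof (Rabs_pos q1).
      assert (Hm4 : m ^ 4 < Rabs q1 ^ 4).
      { apply p4_lt; lra. }
      rewrite RPow_abs in Hm4.
      assert (Rabs (q1 ^ 4) = u ^ 2) by (unfold u; rewrite Rabs_right; [ring| apply Rle_ge; replace (q1^4) with ((q1^2)^2) by ring; apply pow2_ge_0]).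
      assert (- q0 * q2 ^ 3 <= m ^ 4).
      { unfold m. assert (- q2 ^3 <= (q0 - q2)^3).
        { replace (- q2^3) with ((-q2)^3) by ring. apply pow_incr. lra. }
        assert (0 <= (q0 - q2)^3) by (apply pow_le; lra).
        assert (q0 * (q0 - q2) ^ 3 <= (q0-q2)^4).
        { replace ((q0-q2)^4) with ((q0-q2)*(q0-q2)^3) by ring. apply Rmult_le_compat_r; lra. }
        assert (- q0 * q2 ^ 3 <= q0 * (q0 - q2) ^ 3).
        { replace (- q0 * q2 ^ 3) with (q0 * (- q2^3)) by ring. apply Rmult_le_compat_l; lra. }
        lra. }
      lra. }
    rewrite (Rabs_left q2) by lra. unfold m in *. lra.
Qed.

Definition d1 (p q : pt3) := Rabs (c0 p - c0 q) + Rabs (c1 p - c1 q) + Rabs (c2 p - c2 q).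
Definition closure1 (A : pt3 -> Prop) (p : pt3) : Prop :=
  forall eps, 0 < eps -> exists q, A q /\ d1 p q < eps.

Lemma abs_le_sqrt3 (a b c : R) : Rabs a <= sqrt (a^2 + b^2 + c^2).
Proof.
  rewrite <- sqrt_Rsqr_abs. apply sqrt_le_1_alt. unfold Rsqr.
  pose proof (pow2_ge_0 b); pose proof (pow2_ge_0 c). nra.
Qed.

Lemma sqrt3_le_l1 (a b c : R) : sqrt (a^2 + b^2 + c^2) <= Rabs a + Rabs b + Rabs c.
Proof.
  pose proof (Rabs_pos a); pose proof (Rabs_pos b); pose proof (Rabs_pos c).
  rewrite <- (sqrt_pow2 (Rabs a + Rabs b + Rabs c)) by lra.
  apply sqrt_le_1_alt.
  rewrite <- (pow2_abs a), <- (pow2_abs b), <- (pow2_abs c).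
  nra.
Qed.

Lemma dist3_le_d1 p q : dist3 p q <= d1 p q.
Proof. unfold dist3, d1. apply sqrt3_le_l1. Qed.

Lemma d1_le_dist3 p q : d1 p q <= 3 * dist3 p q.
Proof.
  unfold dist3, d1.
  pose proof (abs_le_sqrt3 (c0 p - c0 q) (c1 p - c1 q) (c2 p - c2 q)).
  pose proof (abs_le_sqrt3 (c1 p - c1 q) (c0 p - c0 q) (c2 p - c2 q)).
  pose proof (abs_le_sqrt3 (c2 p - c2 q) (c0 p - c0 q) (c1 p - c1 q)).
  replace ((c1 p - c1 q) ^ 2 + (c0 p - c0 q) ^ 2 + (c2 p - c2 q) ^ 2) with
    ((c0 p - c0 q) ^ 2 + (c1 p - c1 q) ^ 2 + (c2 p - c2 q) ^ 2) in H0 by ring.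
  replace ((c2 p - c2 q) ^ 2 + (c0 p - c0 q) ^ 2 + (c1 p - c1 q) ^ 2) with
    ((c0 p - c0 q) ^ 2 + (c1 p - c1 q) ^ 2 + (c2 p - c2 q) ^ 2) in H1 by ring.
  lra.
Qed.

Lemma closure31 A p : closure3 A p <-> closure1 A p.
Proof.
  split; intros H eps He.
  - destruct (H (eps/3)) as [q [Hq Hd]]. lra. exists q. split; auto.
    pose proof (d1_le_dist3 p q). lra.
  - destruct (H eps He) as [q [Hq Hd]]. exists q. split; auto.
    pose proof (dist3_le_d1 p q). lra.
Qed.

Lemma d1_triang p q r : d1 p r <= d1 p q + d1 q r.
Proof.
  unfold d1.
  pose proof (Rabs_triang (c0 p - c0 q) (c0 q - c0 r)).
  pose proof (Rabs_triang (c1 p - c1 q) (c1 q - c1 r)).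
  pose proof (Rabs_triang (c2 p - c2 q) (c2 q - c2 r)).
  replace (c0 p - c0 q + (c0 q - c0 r)) with (c0 p - c0 r) in H by ring.
  replace (c1 p - c1 q + (c1 q - c1 r)) with (c1 p - c1 r) in H0 by ring.
  replace (c2 p - c2 q + (c2 q - c2 r)) with (c2 p - c2 r) in H1 by ring.
  lra.
Qed.

Lemma d1_pos p q : 0 <= d1 p q.
Proof. unfold d1. pose proof (Rabs_pos (c0 p - c0 q)); pose proof (Rabs_pos (c1 p - c1 q));
  pose proof (Rabs_pos (c2 p - c2 q)). lra. Qed.

Lemma G_lip p q : N1 p - 4 * Lf p <= N1 q - 4 * Lf q + 5 * d1 p q.
Proof.
  unfold N1, Lf, d1.
  pose proof (Rabs_triang_inv (c0 p) (c0 q)).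
  pose proof (Rabs_triang_inv (c1 p) (c1 q)).
  pose proof (Rabs_triang_inv (c2 p) (c2 q)).
  pose proof (Rle_abs (c0 q - c0 p)). pose proof (Rle_abs (c2 p - c2 q)).
  rewrite Rabs_minus_sym in H2.
  pose proof (Rabs_pos (c1 p - c1 q)). pose proof (Rabs_pos (c0 p - c0 q)).
  pose proof (Rabs_pos (c2 p - c2 q)). lra.
Qed.

Lemma closure_bound (A : pt3 -> Prop) p :
  (forall q, A q -> N1 q <= 4 * Lf q) -> closure1 A p -> N1 p <= 4 * Lf p.
Proof.
  intros HA Hp. destruct (Rle_dec (N1 p) (4 * Lf p)) as [h|h]; auto. exfalso.
  destruct (Hp ((N1 p - 4 * Lf p)/10)) as [q [Hq Hd]]. lra.
  pose proof (HA q Hq). pose proof (G_lip p q). pose proof (d1_pos p q). lra.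
Qed.

Definition C := closure3 Stilde_o.

Lemma C_bound q : C q -> N1 q <= 4 * Lf q.
Proof.
  intro H. apply closure31 in H. apply (closure_bound Stilde_o); auto.
  intros [a b c] [H1 H2]. unfold N1, Lf; simpl in *. apply poly_bound; auto.
Qed.

Lemma C_closed q : closure1 C q -> C q.
Proof.
  intros H. apply closure31. intros eps He.
  destruct (H (eps/2)) as [r [Hr Hd]]. lra.
  apply closure31 in Hr. destruct (Hr (eps/2)) as [s [Hs Hd']]. lra.
  exists s. split; auto. pose proof (d1_triang q r s). lra.
Qed.

Lemma abs_scale t x y : 0 <= t -> Rabs (t * x - t * y) = t * Rabs (x - y).
Proof. intros. replace (t*x - t*y) with (t*(x-y)) by ring. rewrite Rabs_mult, Rabs_pos_eq; auto. Qed.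

Lemma C_scale q t : C q -> 0 <= t -> C (pscale t q).
Proof.
  intros H Ht. apply closure31. intros eps He.
  destruct (Req_dec t 0) as [->|Ht0].
  - exists (P3 (eps/2) 0 0). split.
    + unfold Stilde_o; simpl. split; [ring| lra].
    + unfold d1; simpl. rewrite !Rmult_0_l.
      replace (0 - eps/2) with (-(eps/2)) by ring. rewrite Rabs_Ropp, Rminus_0_r, Rabs_R0.
      rewrite Rabs_pos_eq by lra. lra.
  - apply closure31 in H. destruct (H (eps / t)) as [r [[Hr1 Hr2] Hd]].
    apply Rdiv_lt_0_compat; lra.
    exists (pscale t r). split.
    + unfold Stilde_o; destruct r as [a b c]; cbn [c0 c1 c2 pscale] in *. split.
      * replace ((t * b) ^ 4 - t * a * (t * b) ^ 2 * (t * c) + t * a * (t * c) ^ 3)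
          with (t^4 * (b ^ 4 - a * b ^ 2 * c + a * c ^ 3)) by ring. rewrite Hr1. ring.
      * apply Rmult_lt_0_compat; lra.
    + unfold d1 in *; simpl. rewrite !abs_scale by lra.
      apply (Rmult_lt_compat_l t) in Hd; [|lra].
      replace (t * (eps / t)) with eps in Hd by (field; lra). lra.
Qed.

Lemma N1_add a b : N1 (padd a b) <= N1 a + N1 b.
Proof. unfold N1, padd; cbn [c0 c1 c2].
  pose proof (Rabs_triang (c0 a) (c0 b)). pose proof (Rabs_triang (c1 a) (c1 b)).
  pose proof (Rabs_triang (c2 a) (c2 b)). lra. Qed.

Lemma Lf_add a b : Lf (padd a b) = Lf a + Lf b.
Proof. unfold Lf, padd; cbn [c0 c1 c2]. ring. Qed.

Definition foldp (l : list (R * pt3)) :=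
  fold_right (fun wq s => padd (pscale (fst wq) (snd wq)) s) origin l.

Lemma fold_bound l : Forall (fun wq => 0 <= fst wq /\ C (snd wq)) l ->
  N1 (foldp l) <= 4 * Lf (foldp l).
Proof.
  induction l as [|[w q] l IH]; intros H.
  - unfold foldp, N1, Lf; simpl. rewrite Rabs_R0. lra.
  - inversion H as [|x y [Hw Hq] Hl]; subst. simpl in Hw, Hq.
    change (foldp ((w,q)::l)) with (padd (pscale w q) (foldp l)).
    pose proof (C_bound _ (C_scale q w Hq Hw)). specialize (IH Hl).
    pose proof (N1_add (pscale w q) (foldp l)). rewrite Lf_add. lra.
Qed.

Lemma K_bound p : conv3 C p -> N1 p <= 4 * Lf p.
Proof. intros [l [Hl [_ ->]]]. apply fold_bound; auto. Qed.

Lemma N1_zero p : N1 p <= 0 -> p = origin.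
Proof. destruct p as [a b c]; unfold N1; cbn [c0 c1 c2]; intros H.
  pose proof (Rabs_pos a); pose proof (Rabs_pos b); pose proof (Rabs_pos c).
  assert (Rabs a = 0) by lra. assert (Rabs b = 0) by lra. assert (Rabs c = 0) by lra.
  destruct (Req_dec a 0); [|apply Rabs_no_R0 in H6; contradiction]. destruct (Req_dec b 0); [|apply Rabs_no_R0 in H7; contradiction]. destruct (Req_dec c 0); [|apply Rabs_no_R0 in H8; contradiction]. subst. reflexivity. Qed.

Lemma part_a p : conv3 C p -> p <> origin -> 0 < c0 p - c2 p.
Proof. intros H Hp. pose proof (K_bound p H).
  destruct (Rle_dec (N1 p) 0) as [h|h]. exfalso; apply Hp, N1_zero; auto.
  unfold Lf in *. lra. Qed.

Lemma part_c : pointed3 (conv3 C).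
Proof. intros p H1 H2. apply K_bound in H1, H2. apply N1_zero.
  assert (N1 (popp p) = N1 p) by (unfold N1, popp; cbn [c0 c1 c2]; rewrite !Rabs_Ropp; ring).
  assert (Lf (popp p) = - Lf p) by (unfold Lf, popp; cbn [c0 c1 c2]; ring). lra. Qed.

Lemma part_d : ~ closed_at_infinity_S.
Proof. intros H. assert (Hc : C (P3 0 0 1)).
  { apply H. unfold Stilde_c; cbn [c0 c1 c2]. split; [ring|lra]. }
  apply C_bound in Hc. unfold N1, Lf in Hc; cbn [c0 c1 c2] in Hc.
  rewrite Rabs_R0, Rabs_R1 in Hc. lra. Qed.

Lemma pt3_eq p q : c0 p = c0 q -> c1 p = c1 q -> c2 p = c2 q -> p = q.
Proof. destruct p, q; cbn; intros; subst; reflexivity. Qed.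

Definition K3 (p : pt3) := exists r1 r2 r3, C r1 /\ C r2 /\ C r3 /\ p = padd r1 (padd r2 r3).

Definition det3 (u v w : pt3) :=
  c0 u * (c1 v * c2 w - c2 v * c1 w) + c1 u * (c2 v * c0 w - c0 v * c2 w)
  + c2 u * (c0 v * c1 w - c1 v * c0 w).

Definition lin3 (a : R) (u : pt3) (b : R) (v : pt3) (c : R) (w : pt3) :=
  a * c0 u + b * c0 v + c * c0 w = 0 /\ a * c1 u + b * c1 v + c * c1 w = 0 /\
  a * c2 u + b * c2 v + c * c2 w = 0.

Lemma dep3 u v w : det3 u v w = 0 -> exists a b c, (a <> 0 \/ b <> 0 \/ c <> 0) /\ lin3 a u b v c w.
Proof.
  destruct u as [u0 u1 u2], v as [v0 v1 v2], w as [w0 w1 w2]; unfold det3, lin3; cbn [c0 c1 c2].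
  intros Hd.
  set (n0 := v1 * w2 - v2 * w1). set (n1 := v2 * w0 - v0 * w2). set (n2 := v0 * w1 - v1 * w0).
  set (nn := n0^2 + n1^2 + n2^2).
  destruct (Req_dec nn 0) as [Hn|Hn].
  - assert (n0 = 0 /\ n1 = 0 /\ n2 = 0) as [E0 [E1 E2]].
    { unfold nn in Hn. pose proof (pow2_ge_0 n0). pose proof (pow2_ge_0 n1). pose proof (pow2_ge_0 n2).
      split; [|split]; apply Rsqr_0_uniq; unfold Rsqr; nra. }
    set (ww := w0^2 + w1^2 + w2^2).
    destruct (Req_dec ww 0) as [Hw|Hw].
    + assert (w0 = 0 /\ w1 = 0 /\ w2 = 0) as [F0 [F1 F2]].
      { unfold ww in Hw. pose proof (pow2_ge_0 w0). pose proof (pow2_ge_0 w1). pose proof (pow2_ge_0 w2).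
        split; [|split]; apply Rsqr_0_uniq; unfold Rsqr; nra. }
      exists 0, 0, 1. split. right; right; lra. rewrite F0, F1, F2. split; [|split]; ring.
    + exists 0, ww, (-(v0*w0 + v1*w1 + v2*w2)). split. right; left; auto.
      unfold ww. split; [|split].
      * transitivity (w1 * n2 - w2 * n1). unfold n1, n2; ring. rewrite E1, E2; ring.
      * transitivity (w2 * n0 - w0 * n2). unfold n0, n2; ring. rewrite E0, E2; ring.
      * transitivity (w0 * n1 - w1 * n0). unfold n0, n1; ring. rewrite E0, E1; ring.
  - set (dot := u0 * n0 + u1 * n1 + u2 * n2).
    assert (Hdot : dot = 0) by (unfold dot, n0, n1, n2; rewrite <- Hd; ring).
    set (m0 := u1 * w2 - u2 * w1). set (m1 := u2 * w0 - u0 * w2). set (m2 := u0 * w1 - u1 * w0).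
    set (k0 := v1 * u2 - v2 * u1). set (k1 := v2 * u0 - v0 * u2). set (k2 := v0 * u1 - v1 * u0).
    exists nn, (-(m0*n0 + m1*n1 + m2*n2)), (-(k0*n0+k1*n1+k2*n2)). split. left; auto.
    split; [|split].
    + transitivity (dot * n0). unfold nn, dot, m0, m1, m2, k0, k1, k2, n0, n1, n2; ring. rewrite Hdot; ring.
    + transitivity (dot * n1). unfold nn, dot, m0, m1, m2, k0, k1, k2, n0, n1, n2; ring. rewrite Hdot; ring.
    + transitivity (dot * n2). unfold nn, dot, m0, m1, m2, k0, k1, k2, n0, n1, n2; ring. rewrite Hdot; ring.
Qed.

Definition lin4 a1 (r1 : pt3) a2 (r2 : pt3) a3 (r3 : pt3) a4 (r4 : pt3) :=
  a1 * c0 r1 + a2 * c0 r2 + a3 * c0 r3 + a4 * c0 r4 = 0 /\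
  a1 * c1 r1 + a2 * c1 r2 + a3 * c1 r3 + a4 * c1 r4 = 0 /\
  a1 * c2 r1 + a2 * c2 r2 + a3 * c2 r3 + a4 * c2 r4 = 0.

Lemma dep4 r1 r2 r3 r4 : exists a1 a2 a3 a4,
  (a1 <> 0 \/ a2 <> 0 \/ a3 <> 0 \/ a4 <> 0) /\ lin4 a1 r1 a2 r2 a3 r3 a4 r4.
Proof.
  destruct (Req_dec (det3 r1 r2 r3) 0) as [H|H].
  - destruct (dep3 r1 r2 r3 H) as [a [b [c [Hn [E0 [E1 E2]]]]]].
    exists a, b, c, 0. split. tauto. unfold lin4; split; [|split]; lra.
  - exists (- det3 r4 r2 r3), (- det3 r1 r4 r3), (- det3 r1 r2 r4), (det3 r1 r2 r3).
    split. tauto. unfold lin4, det3; split; [|split]; ring.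
Qed.

Lemma dep4_pos r1 r2 r3 r4 : exists a1 a2 a3 a4,
  (0 < a1 \/ 0 < a2 \/ 0 < a3 \/ 0 < a4) /\ lin4 a1 r1 a2 r2 a3 r3 a4 r4.
Proof.
  destruct (dep4 r1 r2 r3 r4) as [a1 [a2 [a3 [a4 [Hn [E0 [E1 E2]]]]]]].
  destruct (Rlt_dec 0 a1); [exists a1, a2, a3, a4; split; [tauto| split; auto]|].
  destruct (Rlt_dec 0 a2); [exists a1, a2, a3, a4; split; [tauto| split; auto]|].
  destruct (Rlt_dec 0 a3); [exists a1, a2, a3, a4; split; [tauto| split; auto]|].
  destruct (Rlt_dec 0 a4); [exists a1, a2, a3, a4; split; [tauto| split; auto]|].
  exists (-a1), (-a2), (-a3), (-a4). split.
  - destruct Hn as [h|[h|[h|h]]]; [left|right;left|right;right;left|right;right;right]; lra.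
  - unfold lin4; split; [|split]; lra.
Qed.

Definition sum4 r1 r2 r3 r4 := padd r1 (padd r2 (padd r3 r4)).

Lemma coef_eq a1 a2 a3 a4 x1 x2 x3 x4 : 0 < a4 ->
  a1 * x1 + a2 * x2 + a3 * x3 + a4 * x4 = 0 ->
  x1 + (x2 + (x3 + x4)) = (1 - a1/a4) * x1 + ((1 - a2/a4) * x2 + (1 - a3/a4) * x3).
Proof.
  intros Ha H.
  assert (x4 = - (a1 * x1 + a2 * x2 + a3 * x3) / a4) by (field_simplify_eq; lra).
  rewrite H0. field. lra.
Qed.

Lemma reduce r1 r2 r3 r4 a1 a2 a3 a4 : C r1 -> C r2 -> C r3 ->
  0 < a4 -> a1 <= a4 -> a2 <= a4 -> a3 <= a4 -> lin4 a1 r1 a2 r2 a3 r3 a4 r4 ->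
  K3 (sum4 r1 r2 r3 r4).
Proof.
  intros H1 H2 H3 Ha h1 h2 h3 [E0 [E1 E2]].
  assert (forall a, a <= a4 -> 0 <= 1 - a / a4).
  { intros a ha. assert (a / a4 <= 1). { apply Rmult_le_reg_r with a4; auto.
      field_simplify; lra. } lra. }
  exists (pscale (1 - a1/a4) r1), (pscale (1 - a2/a4) r2), (pscale (1 - a3/a4) r3).
  split; [apply C_scale; auto|]. split; [apply C_scale; auto|]. split; [apply C_scale; auto|].
  apply pt3_eq; unfold sum4, padd, pscale; cbn [c0 c1 c2]; eapply coef_eq; eauto.
Qed.

Lemma max4 a1 a2 a3 a4 : exists k, (k = a1 \/ k = a2 \/ k = a3 \/ k = a4) /\
  a1 <= k /\ a2 <= k /\ a3 <= k /\ a4 <= k.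
Proof.
  exists (Rmax (Rmax a1 a2) (Rmax a3 a4)).
  split.
  - unfold Rmax; repeat destruct Rle_dec; tauto.
  - unfold Rmax; repeat destruct Rle_dec; lra.
Qed.

Lemma K3_ext p q : K3 p -> c0 p = c0 q -> c1 p = c1 q -> c2 p = c2 q -> K3 q.
Proof. intros H h0 h1 h2. rewrite <- (pt3_eq p q h0 h1 h2). auto. Qed.

Lemma four_to_three r1 r2 r3 r4 : C r1 -> C r2 -> C r3 -> C r4 -> K3 (sum4 r1 r2 r3 r4).
Proof.
  intros H1 H2 H3 H4.
  destruct (dep4_pos r1 r2 r3 r4) as [a1 [a2 [a3 [a4 [Hp [E0 [E1 E2]]]]]]].
  destruct (max4 a1 a2 a3 a4) as [k [Hk [k1 [k2 [k3 k4]]]]].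
  assert (0 < k) by (destruct Hp as [h|[h|[h|h]]]; lra).
  destruct Hk as [ -> | [ -> | [ -> | -> ]]].
  - apply (K3_ext (sum4 r4 r2 r3 r1)); [| unfold sum4, padd; cbn [c0 c1 c2]; ring | unfold sum4, padd; cbn [c0 c1 c2]; ring | unfold sum4, padd; cbn [c0 c1 c2]; ring].
    apply (reduce r4 r2 r3 r1 a4 a2 a3 a1); auto. unfold lin4; split; [|split]; lra.
  - apply (K3_ext (sum4 r1 r4 r3 r2)); [| unfold sum4, padd; cbn [c0 c1 c2]; ring | unfold sum4, padd; cbn [c0 c1 c2]; ring | unfold sum4, padd; cbn [c0 c1 c2]; ring].
    apply (reduce r1 r4 r3 r2 a1 a4 a3 a2); auto. unfold lin4; split; [|split]; lra.
  - apply (K3_ext (sum4 r1 r2 r4 r3)); [| unfold sum4, padd; cbn [c0 c1 c2]; ring | unfold sum4, padd; cbn [c0 c1 c2]; ring | unfold sum4, padd; cbn [c0 c1 c2]; ring].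
    apply (reduce r1 r2 r4 r3 a1 a2 a4 a3); auto. unfold lin4; split; [|split]; lra.
  - apply (reduce r1 r2 r3 r4 a1 a2 a3 a4); auto. unfold lin4; split; [|split]; lra.
Qed.

Lemma C_origin : C origin.
Proof. replace origin with (pscale 0 (P3 1 0 0)).
  - apply C_scale; [|lra]. intros eps He.
    exists (P3 1 0 0). split. unfold Stilde_o; cbn [c0 c1 c2]; split; [ring|lra].
    unfold dist3; cbn [c0 c1 c2]. replace ((1 - 1) ^ 2 + (0 - 0) ^ 2 + (0 - 0) ^ 2) with 0 by ring.
    rewrite sqrt_0. auto.
  - apply pt3_eq; unfold pscale, origin; cbn [c0 c1 c2]; ring.
Qed.

Lemma conv_K3_fold l : Forall (fun wq => 0 <= fst wq /\ C (snd wq)) l -> K3 (foldp l).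
Proof.
  induction l as [|[w q] l IH]; intros H.
  - exists origin, origin, origin. pose proof C_origin.
    split; [auto|split; [auto|split; [auto|]]].
    apply pt3_eq; unfold foldp, padd, origin; cbn [c0 c1 c2 fold_right]; ring.
  - inversion H as [|x y [Hw Hq] Hl]; subst. simpl in Hw, Hq.
    destruct (IH Hl) as [r1 [r2 [r3 [H1 [H2 [H3 E]]]]]].
    change (foldp ((w,q)::l)) with (padd (pscale w q) (foldp l)). rewrite E.
    apply (four_to_three (pscale w q) r1 r2 r3); auto. apply C_scale; auto.
Qed.

Lemma conv_K3 p : conv3 C p <-> K3 p.
Proof.
  split.
  - intros [l [Hl [_ ->]]]. apply conv_K3_fold; auto.
  - intros [r1 [r2 [r3 [H1 [H2 [H3 ->]]]]]].
    exists ((1/3, pscale 3 r1) :: (1/3, pscale 3 r2) :: (1/3, pscale 3 r3) :: nil).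
    split; [|split].
    + repeat constructor; simpl; try lra; apply C_scale; auto; lra.
    + simpl. field.
    + apply pt3_eq; unfold padd, pscale, origin; cbn [c0 c1 c2 fold_right fst snd]; field.
Qed.

Lemma inc_mono (f : nat -> nat) : (forall n, (f n < f (Datatypes.S n))%nat) -> forall m n, (m < n)%nat -> (f m < f n)%nat.
Proof. intros Hf m n Hmn. induction Hmn. apply Hf. specialize (Hf m0). lia. Qed.

Lemma inc_ge (f : nat -> nat) : (forall n, (f n < f (Datatypes.S n))%nat) -> forall n, (n <= f n)%nat.
Proof. intros Hf n. induction n. lia. specialize (Hf n). lia. Qed.

Lemma cv_sub (v : nat -> R) l f : Un_cv v l -> (forall n, (f n < f (Datatypes.S n))%nat) -> Un_cv (fun n => v (f n)) l.
Proof. intros Hv Hf eps He. destruct (Hv eps He) as [N HN]. exists N. intros n Hn.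
  apply HN. pose proof (inc_ge f Hf n). lia. Qed.

Lemma inv_le_N (N n : nat) : (0 < N)%nat -> (N <= n)%nat -> / INR n <= / INR N.
Proof. intros. apply Rinv_le_contravar. apply lt_0_INR; lia. apply le_INR; lia. Qed.

Lemma sub1 (u : nat -> R) B : (forall n, Rabs (u n) <= B) ->
  exists phi : nat -> nat, (forall n, (phi n < phi (Datatypes.S n))%nat) /\ exists l, Un_cv (fun n => u (phi n)) l.
Proof.
  intros Hb. destruct (Bolzano_Weierstrass u (fun c => -B <= c <= B) (compact_P3 _ _)) as [l Hl].
  { intro n; specialize (Hb n). unfold Rabs in Hb; destruct Rcase_abs in Hb; lra. }
  assert (Hg: forall N k, {p : nat | (N <= p)%nat /\ Rabs (u p - l) < / INR (Datatypes.S k)}).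
  { intros N k. apply constructive_indefinite_description.
    assert (pos: 0 < / INR (Datatypes.S k)) by (apply Rinv_0_lt_compat, lt_0_INR; lia).
    destruct (Hl (disc l (mkposreal _ pos)) N) as [p [Hp1 Hp2]].
    - exists (mkposreal _ pos). intros y hy; exact hy.
    - exists p. split; auto. }
  set (g := fun N k => proj1_sig (Hg N k)).
  assert (Hg1 : forall N k, (N <= g N k)%nat /\ Rabs (u (g N k) - l) < / INR (Datatypes.S k)).
  { intros N k. unfold g. destruct (Hg N k) as [p hp]. exact hp. }
  set (phi := fix phi n := match n with 0%nat => g 0%nat 0%nat | Datatypes.S m => g (Datatypes.S (phi m)) (Datatypes.S m) end).
  assert (E0 : phi 0%nat = g 0%nat 0%nat) by reflexivity.
  assert (ES : forall m, phi (Datatypes.S m) = g (Datatypes.S (phi m)) (Datatypes.S m)) by reflexivity.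
  exists phi. split.
  - intro n. rewrite ES. destruct (Hg1 (Datatypes.S (phi n)) (Datatypes.S n)). lia.
  - exists l. assert (Hc : forall n, Rabs (u (phi n) - l) < / INR (Datatypes.S n)).
    { intros [|m]. rewrite E0. apply Hg1. rewrite ES. apply Hg1. }
    intros eps He. destruct (archimed_cor1 eps He) as [N [HN1 HN2]].
    exists N. intros n Hn. unfold Rdist. pose proof (Hc n). pose proof (inv_le_N N (Datatypes.S n) HN2 ltac:(lia)). lra.
Qed.

Lemma subk (k : nat) (u : nat -> nat -> R) B : (forall i n, Rabs (u i n) <= B) ->
  exists phi : nat -> nat, (forall n, (phi n < phi (Datatypes.S n))%nat) /\
    forall i, (i < k)%nat -> exists l, Un_cv (fun n => u i (phi n)) l.
Proof.
  intros Hb. induction k as [|k IH].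
  - exists (fun n => n). split. intros; lia. intros; lia.
  - destruct IH as [phi [Hphi Hl]].
    destruct (sub1 (fun n => u k (phi n)) B (fun n => Hb k (phi n))) as [psi [Hpsi [l Hl']]].
    exists (fun n => phi (psi n)). split.
    + intro n. apply inc_mono; auto.
    + intros i Hi. destruct (Nat.eq_dec i k) as [->|Hik].
      * exists l. exact Hl'.
      * destruct (Hl i ltac:(lia)) as [li Hli]. exists li.
        apply (cv_sub (fun n => u i (phi n)) li psi); auto.
Qed.

Lemma d1_sym p q : d1 p q = d1 q p.
Proof. unfold d1. rewrite (Rabs_minus_sym (c0 p)), (Rabs_minus_sym (c1 p)), (Rabs_minus_sym (c2 p)). ring. Qed.

Lemma d1_padd a b c d : d1 (padd a b) (padd c d) <= d1 a c + d1 b d.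
Proof. unfold d1, padd; cbn [c0 c1 c2].
  pose proof (Rabs_triang (c0 a - c0 c) (c0 b - c0 d)).
  pose proof (Rabs_triang (c1 a - c1 c) (c1 b - c1 d)).
  pose proof (Rabs_triang (c2 a - c2 c) (c2 b - c2 d)).
  replace (c0 a + c0 b - (c0 c + c0 d)) with (c0 a - c0 c + (c0 b - c0 d)) by ring.
  replace (c1 a + c1 b - (c1 c + c1 d)) with (c1 a - c1 c + (c1 b - c1 d)) by ring.
  replace (c2 a + c2 b - (c2 c + c2 d)) with (c2 a - c2 c + (c2 b - c2 d)) by ring.
  lra. Qed.

Lemma Lf_d1 p q : Lf q <= Lf p + d1 p q.
Proof. unfold Lf, d1. pose proof (Rle_abs (c0 q - c0 p)). rewrite Rabs_minus_sym in H.
  pose proof (Rle_abs (c2 p - c2 q)). pose proof (Rabs_pos (c1 p - c1 q)). lra. Qed.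

Lemma N1_nonneg p : 0 <= N1 p.
Proof. unfold N1. pose proof (Rabs_pos (c0 p)); pose proof (Rabs_pos (c1 p)); pose proof (Rabs_pos (c2 p)). lra. Qed.

Lemma cv_pt (X : nat -> pt3) a b c :
  Un_cv (fun n => c0 (X n)) a -> Un_cv (fun n => c1 (X n)) b -> Un_cv (fun n => c2 (X n)) c ->
  forall eps, 0 < eps -> exists N, forall n, (n >= N)%nat -> d1 (X n) (P3 a b c) < eps.
Proof.
  intros Ha Hb Hc eps He.
  destruct (Ha (eps/3)) as [N1' h1]. lra. destruct (Hb (eps/3)) as [N2 h2]. lra.
  destruct (Hc (eps/3)) as [N3 h3]. lra.
  exists (Nat.max N1' (Nat.max N2 N3)). intros n Hn. unfold d1; cbn [c0 c1 c2].
  specialize (h1 n ltac:(lia)); specialize (h2 n ltac:(lia)); specialize (h3 n ltac:(lia)).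
  unfold Rdist in *. lra.
Qed.

Lemma d1_zero p q : (forall eps, 0 < eps -> d1 p q < eps) -> p = q.
Proof.
  intros H. assert (Hz : d1 p q <= 0).
  { destruct (Rle_dec (d1 p q) 0); auto. specialize (H (d1 p q)). lra. }
  unfold d1 in Hz.
  pose proof (Rabs_pos (c0 p - c0 q)); pose proof (Rabs_pos (c1 p - c1 q)); pose proof (Rabs_pos (c2 p - c2 q)).
  apply pt3_eq.
  - destruct (Req_dec (c0 p - c0 q) 0). lra. apply Rabs_no_R0 in H3. lra.
  - destruct (Req_dec (c1 p - c1 q) 0). lra. apply Rabs_no_R0 in H3. lra.
  - destruct (Req_dec (c2 p - c2 q) 0). lra. apply Rabs_no_R0 in H3. lra.
Qed.

Lemma K3_closed p : closure1 K3 p -> K3 p.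
Proof.
  intros H.
  assert (Hn : forall n : nat, {t : pt3 * pt3 * pt3 | C (fst (fst t)) /\ C (snd (fst t)) /\ C (snd t) /\
     d1 p (padd (fst (fst t)) (padd (snd (fst t)) (snd t))) < / INR (Datatypes.S n)}).
  { intro n. apply constructive_indefinite_description.
    destruct (H (/ INR (Datatypes.S n))) as [q [[r1 [r2 [r3 [H1 [H2 [H3 ->]]]]]] Hd]].
    apply Rinv_0_lt_compat, lt_0_INR; lia.
    exists (r1, r2, r3). simpl. auto. }
  set (R1 := fun n => fst (fst (proj1_sig (Hn n)))).
  set (R2 := fun n => snd (fst (proj1_sig (Hn n)))).
  set (R3 := fun n => snd (proj1_sig (Hn n))).
  assert (HR : forall n, C (R1 n) /\ C (R2 n) /\ C (R3 n) /\
     d1 p (padd (R1 n) (padd (R2 n) (R3 n))) < / INR (Datatypes.S n)).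
  { intro n. unfold R1, R2, R3. destruct (Hn n) as [t ht]. exact ht. }
  set (B := 4 * (Rabs (Lf p) + 1)).
  assert (HB : forall n, N1 (R1 n) <= B /\ N1 (R2 n) <= B /\ N1 (R3 n) <= B).
  { intro n. destruct (HR n) as [H1 [H2 [H3 Hd]]].
    pose proof (C_bound _ H1); pose proof (C_bound _ H2); pose proof (C_bound _ H3).
    pose proof (N1_nonneg (R1 n)); pose proof (N1_nonneg (R2 n)); pose proof (N1_nonneg (R3 n)).
    pose proof (Lf_d1 p (padd (R1 n) (padd (R2 n) (R3 n)))) as HL.
    rewrite !Lf_add in HL.
    assert (/ INR (Datatypes.S n) <= 1).
    { replace 1 with (/ INR 1) by (simpl; field). apply inv_le_N; lia. }
    pose proof (Rle_abs (Lf p)). unfold B. lra. }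
  set (u := fun i n => match i with
     | 0%nat => c0 (R1 n) | 1%nat => c1 (R1 n) | 2%nat => c2 (R1 n)
     | 3%nat => c0 (R2 n) | 4%nat => c1 (R2 n) | 5%nat => c2 (R2 n)
     | 6%nat => c0 (R3 n) | 7%nat => c1 (R3 n) | _ => c2 (R3 n) end).
  assert (Hu : forall i n, Rabs (u i n) <= B).
  { intros i n. destruct (HB n) as [b1 [b2 b3]]. unfold N1 in *.
    pose proof (Rabs_pos (c0 (R1 n))); pose proof (Rabs_pos (c1 (R1 n))); pose proof (Rabs_pos (c2 (R1 n))).
    pose proof (Rabs_pos (c0 (R2 n))); pose proof (Rabs_pos (c1 (R2 n))); pose proof (Rabs_pos (c2 (R2 n))).
    pose proof (Rabs_pos (c0 (R3 n))); pose proof (Rabs_pos (c1 (R3 n))); pose proof (Rabs_pos (c2 (R3 n))).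
    destruct i as [|[|[|[|[|[|[|[|i]]]]]]]]; simpl; lra. }
  destruct (subk 9 u B Hu) as [phi [Hphi Hl]].
  destruct (Hl 0%nat ltac:(lia)) as [l0 L0]. destruct (Hl 1%nat ltac:(lia)) as [l1 L1].
  destruct (Hl 2%nat ltac:(lia)) as [l2 L2]. destruct (Hl 3%nat ltac:(lia)) as [l3 L3].
  destruct (Hl 4%nat ltac:(lia)) as [l4 L4]. destruct (Hl 5%nat ltac:(lia)) as [l5 L5].
  destruct (Hl 6%nat ltac:(lia)) as [l6 L6]. destruct (Hl 7%nat ltac:(lia)) as [l7 L7].
  destruct (Hl 8%nat ltac:(lia)) as [l8 L8].
  simpl in L0, L1, L2, L3, L4, L5, L6, L7, L8.
  pose proof (cv_pt (fun n => R1 (phi n)) l0 l1 l2 L0 L1 L2) as CV1.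
  pose proof (cv_pt (fun n => R2 (phi n)) l3 l4 l5 L3 L4 L5) as CV2.
  pose proof (cv_pt (fun n => R3 (phi n)) l6 l7 l8 L6 L7 L8) as CV3.
  assert (Hlim : forall (X : nat -> pt3) q, (forall n, C (X n)) ->
     (forall eps, 0 < eps -> exists N, forall n, (n >= N)%nat -> d1 (X n) q < eps) -> C q).
  { intros X q HX HXq. apply C_closed. intros eps He. destruct (HXq eps He) as [N HN].
    exists (X N). split; auto. rewrite d1_sym. apply HN; lia. }
  exists (P3 l0 l1 l2), (P3 l3 l4 l5), (P3 l6 l7 l8).
  split; [apply (Hlim (fun n => R1 (phi n))); auto; intro n; apply HR|].
  split; [apply (Hlim (fun n => R2 (phi n))); auto; intro n; apply HR|].
  split; [apply (Hlim (fun n => R3 (phi n))); auto; intro n; apply HR|].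
  apply d1_zero. intros eps He.
  destruct (CV1 (eps/4)) as [M1 HM1]. lra. destruct (CV2 (eps/4)) as [M2 HM2]. lra.
  destruct (CV3 (eps/4)) as [M3 HM3]. lra.
  destruct (archimed_cor1 (eps/4)) as [M0 [HM0 HM0']]. lra.
  set (n := Nat.max M0 (Nat.max M1 (Nat.max M2 M3))).
  specialize (HM1 n ltac:(unfold n; lia)). specialize (HM2 n ltac:(unfold n; lia)).
  specialize (HM3 n ltac:(unfold n; lia)).
  destruct (HR (phi n)) as [_ [_ [_ Hd]]].
  pose proof (inc_ge phi Hphi n).
  pose proof (inv_le_N M0 (Datatypes.S (phi n)) HM0' ltac:(unfold n in *; lia)).
  pose proof (d1_triang p (padd (R1 (phi n)) (padd (R2 (phi n)) (R3 (phi n))))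
     (padd (P3 l0 l1 l2) (padd (P3 l3 l4 l5) (P3 l6 l7 l8)))).
  pose proof (d1_padd (R1 (phi n)) (padd (R2 (phi n)) (R3 (phi n))) (P3 l0 l1 l2) (padd (P3 l3 l4 l5) (P3 l6 l7 l8))).
  pose proof (d1_padd (R2 (phi n)) (R3 (phi n)) (P3 l3 l4 l5) (P3 l6 l7 l8)).
  lra.
Qed.

Theorem mainTheorem20 :
  (forall p, conv3 (closure3 Stilde_o) p -> p <> origin -> 0 < c0 p - c2 p) /\
  is_closed3 (conv3 (closure3 Stilde_o)) /\
  pointed3 (conv3 (closure3 Stilde_o)) /\
  ~ closed_at_infinity_S.
Proof.
  split; [exact part_a|]. split; [|split; [exact part_c| exact part_d]].
  intros p Hp. apply closure31 in Hp. apply conv_K3. apply K3_closed.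
  intros eps He. destruct (Hp eps He) as [q [Hq Hd]]. exists q. split; auto. apply conv_K3; auto.
Qed.
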